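(* For all integers $n\geqslant2$ and $s\geqslant2$, every subset of cardinality $n-1$ of the family of events $\{A_{n,s,1},\dots,A_{n,s,n}\}$ is mutually independent, where $A_{n,s,i}$ is the event, defined in the context, that the $i$-th fluid flows from the centre to the boundary.
   Context: Consider the tiling of the plane by regular hexagons of side $1$, called cells. For an integer $s\geqslant2$, fix a cell $O$. Let $M_s$ be the set of all cells lying inside the regular hexagon that is centred at the centre of $O$, has sides of length $s\sqrt3$, and has its sides perpendicular to sides of the cells. The set $M_s$ has $m+1=1+3s(s-1)$ cells. Number the cells other than $O$ as $v_1,\dots,v_m$. Two cells are neighbours if they share a side. A cell of $M_s$ is a boundary cell if it has fewer than six neighbours in $M_s$. For an integer $n\geqslant2$, let $\Omega_{n,s}$ be the set of $n$-tuples $f=(f_1,\dots,f_n)$ of functions $f_i:\{v_1,\dots,v_m\}\to\{0,1\}$ such that $f_1+\dots+f_n\equiv1\pmod 2$ at every cell. Equip $\Omega_{n,s}$ with the uniform probability measure $P(A)=|A|\,2^{-(n-1)m}$. A path from the centre to the boundary is a sequence of pairwise distinct cells $v_{j_1},\dots,v_{j_t}$ with the following properties: - $v_{j_1}$ is a neighbour of $O$; - $v_{j_l}$ and $v_{j_{l+1}}$ are neighbours for each $l$; - $v_{j_t}$ is a boundary cell. The $i$-th fluid flows from the centre to the boundary for $f$ if there is such a path with $f_i(v_{j_l})=1$ for all $l$. Let $A_{n,s,i}\subset\Omega_{n,s}$ be this event. *)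

(* Defs.v *)
From mathcomp Require Import all_boot all_order all_algebra.
From mathcomp Require Import boolp.
Set Implicit Arguments. Unset Strict Implicit. Unset Printing Implicit Defensive.
Import Order.TTheory GRing.Theory Num.Theory.

(* Cells of the hexagonal tiling are identified with their centres, given in
   axial coordinates (q, r) in Z^2 of the triangular lattice of cell centres;
   the centre of O is (0,0). *)

Definition hex_nbr (a b : int * int) : bool :=
  ((b.1 - a.1)%R, (b.2 - a.2)%R) \in
    [:: (1%:Z%R, 0%:Z%R); ((-1)%R, 0%:Z%R); (0%:Z%R, 1%:Z%R); (0%:Z%R, (-1)%R);
        (1%:Z%R, (-1)%R); ((-1)%R, 1%:Z%R)].

(* hexagonal (graph) distance from the centre O *)
Definition hex_norm (a : int * int) : nat :=
  maxn `|a.1|%N (maxn `|a.2|%N `|(a.1 + a.2)%R|%N).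

(* A finite window of the lattice containing M_s: indices 0..2s-2, shifted. *)
Definition grid (s : nat) := ('I_(2 * s - 1) * 'I_(2 * s - 1))%type.

Definition coord (s : nat) (c : grid s) : int * int :=
  ((c.1 : nat)%:Z%R - (s - 1)%:Z%R, (c.2 : nat)%:Z%R - (s - 1)%:Z%R)%R.

(* c lies in M_s (cells inside the hexagon of side s*sqrt 3 centred at O):
   hexagonal distance at most s-1 from O; there are 1 + 3s(s-1) of them. *)
Definition inM (s : nat) (c : grid s) : bool := hex_norm (coord c) <= s - 1.

Definition isO (s : nat) (c : grid s) : bool := coord c == (0%R, 0%R).

Definition inV (s : nat) (c : grid s) : bool := inM c && ~~ isO c.

Definition Vcell (s : nat) := {c : grid s | inV c}.

Definition m_of (s : nat) : nat := #|{: Vcell s}|.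

Definition vnbr (s : nat) (v w : Vcell s) : bool := hex_nbr (coord (val v)) (coord (val w)).

Definition nbr_of_O (s : nat) (v : Vcell s) : bool := hex_nbr (0%R, 0%R) (coord (val v)).

Definition boundary (s : nat) (v : Vcell s) : bool :=
  #|[set c : grid s | inM c && hex_nbr (coord (val v)) (coord c)]| < 6.

Definition config (n s : nat) := {ffun 'I_n -> {ffun Vcell s -> bool}}.

Definition in_Omega (n s : nat) (f : config n s) : bool :=
  [forall v : Vcell s, odd (\sum_(i < n) (f i v : nat))].

Definition Omega (n s : nat) := {f : config n s | in_Omega f}.

Definition Pr (n s : nat) (A : {set Omega n s}) : rat :=
  ((#|A|)%:R / (2 ^ ((n - 1) * m_of s))%:R)%R.

Definition flows (n s : nat) (i : 'I_n) (f : config n s) : Prop :=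
  exists (v0 : Vcell s) (p : seq (Vcell s)),
    [/\ uniq (v0 :: p), nbr_of_O v0, path (@vnbr s) v0 p,
        boundary (last v0 p) & all (fun v => f i v) (v0 :: p)].

Definition A_event (n s : nat) (i : 'I_n) : {set Omega n s} :=
  [set f : Omega n s | `[< flows i (val f) >]].

Definition mutually_independent (n s : nat) (J : {set 'I_n}) : Prop :=
  forall K : {set 'I_n}, K \subset J ->
    Pr (\bigcap_(i in K) A_event s i) = (\prod_(i in K) Pr (A_event s i))%R.

(* Main.v *)
Require Import Defs.
From mathcomp Require Import all_boot all_order all_algebra.
From mathcomp Require Import boolp zify.
Import Order.TTheory GRing.Theory Num.Theory.

Section S.
Variables (n s : nat) (j : 'I_n).
Notation V := (Vcell s).
Notation FB := {ffun V -> bool}.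

Definition flowsg (g : FB) : Prop :=
  exists (v0 : Vcell s) (p : seq (Vcell s)),
    [/\ uniq (v0 :: p), nbr_of_O v0, path (@vnbr s) v0 p,
        boundary (last v0 p) & all (fun v => g v) (v0 :: p)].
Definition Bp (g : FB) : bool := `[< flowsg g >].

Definition psi (f : Omega n s) : config n s :=
  [ffun i => if i == j then [ffun=> false] else val f i].

Definition rest (g : config n s) (v : V) : nat := \sum_(i < n | i != j) (g i v : nat).

Lemma parity (f : Omega n s) v : val f j v = ~~ odd (rest (val f) v).
Proof.
have := forallP (valP f) v.
rewrite (bigD1 j) //= oddD oddb /rest.
by case: (val f j v); case: odd.
Qed.

Lemma psi_inj : injective psi.
Proof.
move=> f g E; apply: val_inj; apply/ffunP => i.
have Ei : forall i, i != j -> val f i = val g i.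
  by move=> k hk; have := congr1 (fun h : config n s => h k) E; rewrite !ffunE (negbTE hk).
case: (eqVneq i j) => [->|hij]; last exact: Ei.
apply/ffunP => v; rewrite !parity /rest.
by congr (~~ odd _); apply: eq_bigr => k hk; rewrite Ei.
Qed.

Definition Fam (K : {set 'I_n}) (i : 'I_n) : pred FB :=
  fun g => if i == j then g == [ffun=> false] else if i \in K then Bp g else true.

Definition lift_cfg (g : config n s) : config n s :=
  [ffun i => if i == j then [ffun v => ~~ odd (rest g v)] else g i].

Lemma lift_ok g : in_Omega (lift_cfg g).
Proof.
apply/forallP => v; rewrite (bigD1 j) //= oddD !ffunE eqxx ffunE oddb.
have -> : \sum_(i < n | i != j) (lift_cfg g i v : nat) = rest g v.
  by apply: eq_bigr => i hi; rewrite ffunE (negbTE hi).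
by case: odd.
Qed.

Lemma card_inter (K : {set 'I_n}) : j \notin K ->
  #|\bigcap_(i in K) A_event s i| = \prod_i #|Fam K i|.
Proof.
move=> jK.
rewrite -(card_in_imset (f := psi)); last by move=> x y _ _; apply: psi_inj.
have -> : \prod_i #|Fam K i| = #|(family (Fam K) : simpl_pred (config n s))|.
  by rewrite card_family foldrE big_map big_enum.
apply: eq_card => g.

apply/imsetP/familyP => [[f hf ->] i | hg].
  rewrite unfold_in /Fam /= ffunE; case: (eqVneq i j) => [_|hij] //.
  case: ifP => // iK; move/bigcapP: hf => /(_ i iK); rewrite inE.
  by move=> h; rewrite /Bp; exact: h.
exists (exist _ (lift_cfg g) (lift_ok g)).
  apply/bigcapP => i iK; rewrite inE /=.
  have hij : i != j by apply: contraNneq jK => <-.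
  have := hg i; rewrite /Fam (negbTE hij) iK => h.
  apply/asboolP; change (flowsg (lift_cfg g i)); rewrite /lift_cfg ffunE (negbTE hij); exact/asboolP.
apply/ffunP => i; rewrite !ffunE /=.
case: eqP => [->|//]; have := hg j; rewrite /Fam eqxx => /eqP.
by move=> ->.
Qed.

Lemma cardFam_j (K : {set 'I_n}) : #|Fam K j| = 1%N.
Proof.
transitivity #|pred1 ([ffun=> false] : FB)|; last exact: card1.
apply: eq_card => g.
by rewrite !unfold_in /Fam /= eqxx.
Qed.

Lemma cardFam_i (K : {set 'I_n}) i : i != j ->
  #|Fam K i| = if i \in K then #|Bp| else #|{: FB}|.
Proof.
move=> hij; case: ifP => iK; apply: eq_card => g;
  by rewrite [in LHS]unfold_in /Fam /= (negbTE hij) iK.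
Qed.

Local Open Scope ring_scope.
Definition pr : rat := (#|Bp|)%:R / (#|{: FB}|)%:R.

Lemma prob (K : {set 'I_n}) : j \notin K ->
  Pr (\bigcap_(i in K) A_event s i) = \prod_(i in K) pr.
Proof.
move=> jK; rewrite /Pr card_inter // natr_prod.
have hN : (2 ^ ((n - 1) * m_of s))%N = (#|{: FB}| ^ (n - 1))%N.
  by rewrite card_ffun card_bool mulnC expnM.
have hNpos : (#|{: FB}|)%:R != 0 :> rat.
  by rewrite pnatr_eq0 -lt0n card_ffun card_bool expn_gt0.
rewrite hN natrX.
have -> : (#|{: FB}|)%:R ^+ (n - 1) = \prod_(i < n | i != j) ((#|{: FB}|)%:R : rat).
  by rewrite prodr_const cardC1 card_ord -subn1.
rewrite (bigD1 j) //= cardFam_j mul1r -prodf_div.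
rewrite (eq_bigr (fun i => if i \in K then pr else 1)); last first.
  move=> i hij; rewrite cardFam_i //; case: ifP => // _; exact: divff.
rewrite -big_mkcondr; apply: eq_bigl => i.
by case: (eqVneq i j) => [->|//]; rewrite (negbTE jK).
Qed.
End S.

Theorem lemma1 (n s : nat) (hn : 2 <= n) (hs : 2 <= s) :
  forall J : {set 'I_n}, #|J| = n - 1 -> mutually_independent s J.
Proof.
move=> J hJ K KJ.
have [j jJ] : exists j, j \notin J.
  apply/existsP; rewrite -negb_forall; apply/negP => /forallP h.
  have : #|J| = n by rewrite -[RHS](card_ord n); apply: eq_card => x; rewrite h.
  by rewrite hJ; lia.
have jK : j \notin K by apply: contra jJ; apply: (subsetP KJ).
rewrite (@prob n s j K jK); apply: eq_bigr => i iK.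
have ij : j \notin [set i] by rewrite in_set1; apply: contraNneq jK => ->.
have := @prob n s j [set i] ij; rewrite big_set1 big_set1 => ->; done.
Qed.
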